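(* Let $S$ be an infinite set and $\mathcal{F}\subseteq 2^S$ countable, nontrivial, and closed under finite unions and finite intersections. Let $A,C\subseteq S$ with $A$ infinite, $C$ infinite, $S\setminus C$ infinite, $A\cap C=\emptyset$, and $A\notin\mathit{cclass}_1(C,\mathcal{F})$. Then there exists $B\subseteq A$ with $B\in\mathit{ccore}_1(C,\mathcal{F})$.
   Context: $\mathcal{F}$ is nontrivial if $\emptyset,S\in\mathcal{F}$ and for all $Q\in\mathcal{F}$ and finite $E\subseteq S$ both $Q\cup E\in\mathcal{F}$ and $Q\setminus E\in\mathcal{F}$. For $C\subseteq S$ and an infinite $A\subseteq S\setminus C$: $A\in\mathit{cclass}_1(C,\mathcal{F})$ iff there is $Q\in\mathcal{F}$ with $S\setminus Q\in\mathcal{F}$, $C\subseteq Q$ and $A\subseteq S\setminus Q$; $B\in\mathit{ccore}_1(C,\mathcal{F})$ iff $B$ is an infinite subset of $S\setminus C$ and every infinite $B'\subseteq B$ satisfies $B'\notin\mathit{cclass}_1(C,\mathcal{F})$. *)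

(* Defs.v *)
(* plain sets over an ambient type T, which plays the role of S. *)
From Stdlib Require Import List.

Definition set (T : Type) := T -> Prop.

Definition subset {T} (X Y : set T) : Prop := forall x, X x -> Y x.
Definition setU {T} (X Y : set T) : set T := fun x => X x \/ Y x.
Definition setI {T} (X Y : set T) : set T := fun x => X x /\ Y x.
Definition setD {T} (X Y : set T) : set T := fun x => X x /\ ~ Y x.
Definition setC {T} (X : set T) : set T := fun x => ~ X x.
Definition set0 {T} : set T := fun _ => False.
Definition setT {T} : set T := fun _ => True.

Definition finite_set {T} (X : set T) : Prop :=
  exists l : list T, forall x, X x -> In x l.
Definition infinite_set {T} (X : set T) : Prop := ~ finite_set X.

Definition family (T : Type) := set T -> Prop.

(* countable family: enumerated by nat (families here contain set0, so nonempty) *)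
Definition countable_family {T} (F : family T) : Prop :=
  exists e : nat -> set T, (forall n, F (e n)) /\ forall Q, F Q -> exists n, e n = Q.

Definition nontrivial {T} (F : family T) : Prop :=
  F set0 /\ F setT /\
  forall Q E, F Q -> finite_set E -> F (setU Q E) /\ F (setD Q E).

Definition closed_union_inter {T} (F : family T) : Prop :=
  forall Q1 Q2, F Q1 -> F Q2 -> F (setU Q1 Q2) /\ F (setI Q1 Q2).

Definition cclass1 {T} (C : set T) (F : family T) (A : set T) : Prop :=
  infinite_set A /\ subset A (setC C) /\
  exists Q, F Q /\ F (setC Q) /\ subset C Q /\ subset A (setC Q).

Definition ccore1 {T} (C : set T) (F : family T) (B : set T) : Prop :=
  infinite_set B /\ subset B (setC C) /\
  forall B', subset B' B -> infinite_set B' -> ~ cclass1 C F B'.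

(* F is a family of *sets*: membership respects extensional equality of subsets *)
Definition ext_family {T} (F : family T) : Prop :=
  forall Q Q', (forall x, Q x <-> Q' x) -> F Q -> F Q'.

(* Main.v *)
Require Import Defs.
From Stdlib Require Import List Classical ClassicalEpsilon Arith Lia.

Section Aux.
Variable T : Type.
Variable pick : nat -> list T -> T.

Fixpoint build (n : nat) : list T :=
  match n with 0 => nil | S n => pick n (build n) :: build n end.

Lemma build_in m n : m < n -> In (pick m (build m)) (build n).
Proof.
  induction n; intros H; [lia|]. simpl.
  destruct (Nat.eq_dec m n) as [->|Hne]; [now left|right; apply IHn; lia].
Qed.

Lemma build_len n : length (build n) = n.
Proof. induction n; simpl; auto. Qed.

Lemma build_nodup (Hp : forall n l, ~ In (pick n l) l) n : NoDup (build n).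
Proof. induction n; simpl; constructor; auto. Qed.
End Aux.

Theorem lemma4p5 (T : Type) (F : family T) (A C : set T) :
  infinite_set (@setT T) ->
  ext_family F -> countable_family F -> nontrivial F -> closed_union_inter F ->
  infinite_set A -> infinite_set C -> infinite_set (setC C) ->
  (forall x, A x -> C x -> False) ->
  ~ cclass1 C F A ->
  exists B, subset B A /\ ccore1 C F B.
Proof.
  intros _ Hext [e [He1 He2]] [HF0 [HFT HFfin]] Hcl HA _ _ HAC Hncl.
  set (cond := fun n => F (e n) /\ F (setC (e n)) /\ subset C (e n)).
  set (Q := fun n : nat => fun x => cond n -> e n x).
  assert (HQ : forall n, F (Q n) /\ F (setC (Q n)) /\ subset C (Q n)).
  { intro n. destruct (classic (cond n)) as [Hc|Hc].
    - destruct Hc as [h1 [h2 h3]]. split; [|split].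
      + eapply Hext; [|exact h1]. intro x; unfold Q; split; auto.
        intros H; apply H; exact (conj h1 (conj h2 h3)).
      + eapply Hext; [|exact h2]. intro x; unfold Q, setC; split.
        * intros H1 H2; apply H1, H2; exact (conj h1 (conj h2 h3)).
        * intros H1 H2; apply H1; auto.
      + intros x Hx _; auto.
    - split; [|split].
      + eapply Hext; [|exact HFT]. intro x; unfold Q, setT; split; tauto.
      + eapply Hext; [|exact HF0]. intro x; unfold Q, set0, setC; split; tauto.
      + intros x _ Hc'; tauto. }
  set (P := fun n : nat => fun x => forall k, k <= n -> Q k x).
  assert (HP : forall n, F (P n) /\ F (setC (P n)) /\ subset C (P n)).
  { induction n.
    - destruct (HQ 0) as [h1 [h2 h3]]. split; [|split].
      + eapply Hext; [|exact h1]. intro x; unfold P; split.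
        * intros H k Hk. replace k with 0 by lia; auto.
        * intros H; apply H; lia.
      + eapply Hext; [|exact h2]. intro x; unfold P, setC; split.
        * intros H1 H2; apply H1; apply H2; lia.
        * intros H1 H2; apply H1; intros k Hk; replace k with 0 by lia; auto.
      + intros x Hx k Hk; replace k with 0 by lia; apply h3; auto.
    - destruct IHn as [h1 [h2 h3]]. destruct (HQ (S n)) as [g1 [g2 g3]].
      split; [|split].
      + eapply Hext; [|exact (proj2 (Hcl _ _ h1 g1))]. intro x; unfold P, setI; split.
        * intros [H1 H2] k Hk. destruct (Nat.eq_dec k (S n)) as [->|]; auto. apply H1; lia.
        * intros H; split; [intros k Hk; apply H; lia| apply H; lia].
      + eapply Hext; [|exact (proj1 (Hcl _ _ h2 g2))]. intro x; unfold P, setU, setC; split.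
        * intros [H1|H1] H2; apply H1; [intros k Hk; apply H2; lia| apply H2; lia].
        * intros H. apply NNPP; intros H'. apply H. intros k Hk.
          destruct (Nat.eq_dec k (S n)) as [->|].
          -- apply NNPP; intro; apply H'; right; auto.
          -- assert (Hpn : P n x) by (apply NNPP; intro HnP; apply H'; left; exact HnP).
             apply Hpn; lia.
      + intros x Hx k Hk. destruct (Nat.eq_dec k (S n)) as [->|]; auto. apply h3; auto; lia. }
  assert (Hex : forall n (l : list T), exists x, A x /\ P n x /\ ~ In x l).
  { intros n l. apply NNPP; intro Hn.
    destruct (HP n) as [h1 [h2 h3]].
    set (E := fun x => In x l /\ ~ C x).
    assert (HE : finite_set E) by (exists l; intros x [Hx _]; exact Hx).
    destruct (HFfin _ _ h1 HE) as [_ k1].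
    destruct (HFfin _ _ h2 HE) as [k2 _].
    apply Hncl. split; [exact HA|]. split; [intros x Hx Hc; exact (HAC x Hx Hc)|].
    exists (setD (P n) E). split; [exact k1|]. split.
    - eapply Hext; [|exact k2]. intro x; unfold setU, setC, setD; split.
      + intros [H|H] [H1 H2]; tauto.
      + intros H. destruct (classic (P n x)); [right|left; auto].
        apply NNPP; intro; apply H; auto.
    - split.
      + intros x Hx; split; [apply h3; auto|]. intros [_ Hc]; tauto.
      + intros x Hx [Hp Hne]. apply Hne. split.
        * apply NNPP; intro Hnl; apply Hn; exists x; auto.
        * intro Hc; exact (HAC x Hx Hc). }
  set (pick := fun n l => proj1_sig (constructive_indefinite_description _ (Hex n l))).
  assert (Hpk : forall n l, A (pick n l) /\ P n (pick n l) /\ ~ In (pick n l) l)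
    by (intros n l; exact (proj2_sig (constructive_indefinite_description _ (Hex n l)))).
  set (b := fun n => pick n (build T pick n)).
  exists (fun x => exists n, x = b n).
  assert (HBA : subset (fun x => exists n, x = b n) A)
    by (intros x [n ->]; apply Hpk).
  split; [exact HBA|]. split; [|split].
  - intros [l Hl].
    pose proof (build_nodup T pick (fun n l => proj2 (proj2 (Hpk n l))) (S (length l))) as Hnd.
    assert (Hinc : incl (build T pick (S (length l))) l).
    { intros x Hx. apply Hl. clear -Hx. induction (S (length l)); simpl in Hx; [contradiction|].
      destruct Hx as [<-|Hx]; [exists n; reflexivity| auto]. }
    pose proof (NoDup_incl_length Hnd Hinc). rewrite build_len in H. lia.
  - intros x Hx Hc; apply (HAC x); auto.
  - intros B' HB' HiB' [_ [_ [Q0 [q1 [q2 [q3 q4]]]]]].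
    destruct (He2 _ q1) as [k Hk]. subst Q0.
    apply HiB'. exists (build T pick k). intros x Hx.
    destruct (HB' x Hx) as [n ->].
    destruct (Nat.lt_ge_cases n k) as [Hlt|Hge].
    + apply build_in; auto.
    + exfalso. apply (q4 _ Hx). destruct (Hpk n (build T pick n)) as [_ [Hp _]].
      apply (Hp k Hge). exact (conj q1 (conj q2 q3)).
Qed.
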